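(* Let $X$ be a finite set, $f:2^X\to\mathbb{R}_{\ge 0}$ a normalized monotone submodular function, $n\ge1$ an integer with $n\le|X|$, and $S^*\in\arg\max_{S\subseteq X,\,|S|\le n} f(S)$. Let $x_1,\dots,x_n\in X$ be distinct, set $S_0=\emptyset$, $S_i=\{x_1,\dots,x_i\}$, $S=S_n$, and let $\alpha_1,\dots,\alpha_n$ be positive reals such that for every $i\in\{1,\dots,n\}$, \[ \alpha_i\, f(x_i\mid S_{i-1}) \ \ge\ \max_{x\in X\setminus S_{i-1}} f(x\mid S_{i-1}). \] Then \[ f(S)\ \ge\ \left(1-e^{-\frac{1}{n}\sum_{i=1}^n \frac{1}{\alpha_i}}\right) f(S^* ). \]
   Context: For $A\subseteq X$ and $x\in X$, $f(x\mid A):=f(A\cup\{x\})-f(A)$, and $f(x):=f(\{x\})$. Submodular: $f(x\mid A)\ge f(x\mid B)$ for all $A\subseteq B\subseteq X$, $x\in X\setminus B$; monotone: $f(A)\le f(B)$ for $A\subseteq B$; normalized: $f(\emptyset)=0$. *)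

(* Defs.v *)
From HB Require Import structures.
From mathcomp Require Import all_boot all_order all_algebra.
From mathcomp Require Import reals sequences exp.
Set Implicit Arguments. Unset Strict Implicit. Unset Printing Implicit Defensive.
Import Order.TTheory GRing.Theory Num.Theory.
Local Open Scope ring_scope.

Definition marg (R : realType) (X : finType) (f : {set X} -> R)
  (x : X) (A : {set X}) : R := f (x |: A) - f A.

Definition normalized (R : realType) (X : finType) (f : {set X} -> R) :=
  f set0 = 0.

Definition monotone (R : realType) (X : finType) (f : {set X} -> R) :=
  forall A B : {set X}, A \subset B -> f A <= f B.

Definition submodular (R : realType) (X : finType) (f : {set X} -> R) :=
  forall (A B : {set X}) (x : X), A \subset B -> x \notin B ->
    marg f x B <= marg f x A.

(* S_i = {x_1, ..., x_i}; with 0-based indices j : 'I_n, x_{j+1} = x j,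
   so gprefix x i = [set x j | j < i]. *)
Definition gprefix (X : finType) (n : nat) (x : 'I_n -> X) (i : nat) : {set X} :=
  [set x j | j : 'I_n & (j < i)%N].

(* Main.v *)
Require Import Defs.
From HB Require Import structures.
From mathcomp Require Import all_boot all_order all_algebra.
From mathcomp Require Import reals sequences exp.
Import Order.TTheory GRing.Theory Num.Theory.
Local Open Scope ring_scope.

Section Aux.
Variables (R : realType) (X : finType) (f : {set X} -> R).
Hypothesis f_mono : monotone f.
Hypothesis f_sub : submodular f.

Lemma marg_ge0 y (A : {set X}) : 0 <= marg f y A.
Proof. by rewrite /marg subr_ge0; apply: (f_mono); apply: subsetUr. Qed.

Lemma marg_in y (A : {set X}) : y \in A -> marg f y A = 0.
Proof. by move=> yA; rewrite /marg (setUidPr _) ?subrr // sub1set. Qed.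

Lemma union_bound (A : {set X}) : forall k (B : {set X}), #|B| = k ->
  f (B :|: A) <= f A + \sum_(y in B) marg f y A.
Proof.
elim=> [|k IH] B cB.
  move/eqP: cB; rewrite cards_eq0 => /eqP ->.
  by rewrite set0U big_set0 addr0.
have : (0 < #|B|)%N by rewrite cB.
case/card_gt0P => y yB.
have cB' : #|B :\ y| = k by rewrite (cardsD1 y B) yB in cB; case: cB.
have IH' := IH _ cB'.
rewrite (@bigD1 _ _ _ _ y (mem B) (fun i => marg f i A) yB) /=.
have -> : B :|: A = y |: ((B :\ y) :|: A).
  by rewrite setUA (setD1K yB).
have -> : \sum_(i in B | i != y) marg f i A = \sum_(i in B :\ y) marg f i A.
  by apply: eq_bigl => i; rewrite in_setD1 andbC.
have hm : f (y |: ((B :\ y) :|: A)) - f ((B :\ y) :|: A) <= marg f y A.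
  case: (boolP (y \in (B :\ y) :|: A)) => Hy.
    by rewrite (setUidPr _) ?sub1set // subrr marg_ge0.
  exact: (f_sub A ((B :\ y) :|: A) y (subsetUr _ _) Hy).
rewrite -(subrK (f ((B :\ y) :|: A)) (f _)).
rewrite addrCA; apply: lerD => //.
Qed.
End Aux.

Lemma gprefixS (X : finType) (n : nat) (x : 'I_n -> X) (i : 'I_n) :
  gprefix x i.+1 = x i |: gprefix x i.
Proof.
apply/setP => z; rewrite /gprefix !inE.
apply/imsetP/idP.
  case=> j; rewrite inE ltnS leq_eqVlt => /orP [/eqP ji|ji] ->.
    by rewrite (_ : j = i) ?eqxx //; apply: val_inj.
  by apply/orP; right; apply/imsetP; exists j => //; rewrite inE.
case/orP => [/eqP ->|/imsetP [j]].
  by exists i => //; rewrite inE ltnS.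
rewrite inE => ji ->; exists j => //; rewrite inE ltnS ltnW //.
Qed.

Lemma gprefix_notin (X : finType) (n : nat) (x : 'I_n -> X) (x_inj : injective x)
  (i : 'I_n) : x i \notin gprefix x i.
Proof.
apply/imsetP => -[j]; rewrite inE => ji /x_inj E.
by move: ji; rewrite E ltnn.
Qed.

Theorem theorem1 (R : realType) (X : finType) (f : {set X} -> R)
  (f_ge0 : forall A : {set X}, 0 <= f A)
  (f_norm : normalized f) (f_mono : monotone f) (f_sub : submodular f)
  (n : nat) (n_ge1 : (1 <= n)%N) (n_le : (n <= #|X|)%N)
  (Sstar : {set X}) (Sstar_card : (#|Sstar| <= n)%N)
  (Sstar_opt : forall S : {set X}, (#|S| <= n)%N -> f S <= f Sstar)
  (x : 'I_n -> X) (x_inj : injective x)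
  (alpha : 'I_n -> R) (alpha_pos : forall i, 0 < alpha i)
  (greedy : forall (i : 'I_n) (y : X), y \notin gprefix x i ->
     marg f y (gprefix x i) <= alpha i * marg f (x i) (gprefix x i)) :
  (1 - expR (- (n%:R^-1 * \sum_(i < n) (alpha i)^-1))) * f Sstar
    <= f (gprefix x n).
Proof.
have OPT0 : 0 <= f Sstar by [].
have n0 : 0 < n%:R :> R by rewrite ltr0n.
set c := fun i : 'I_n => n%:R^-1 * (alpha i)^-1.
have key : forall i : 'I_n, (f Sstar) - f (gprefix x i) <=
    n%:R * alpha i * (f (gprefix x i.+1) - f (gprefix x i)).
  move=> i.
  set A := gprefix x i.
  have hU := @union_bound _ _ f f_mono f_sub A _ Sstar (erefl _).
  have h1 : (f Sstar) <= f (Sstar :|: A) by apply: (f_mono); apply: subsetUl.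
  have h2 : \sum_(y in Sstar) marg f y A <= \sum_(y in Sstar) (alpha i * marg f (x i) A).
    apply: ler_sum => y _.
    case: (boolP (y \in A)) => yA; last exact: greedy.
    by rewrite (@marg_in _ _ f _ _ yA) mulr_ge0 ?(@marg_ge0 _ _ f f_mono _ _) // ltW.
  rewrite sumr_const in h2.
  have h3 : (alpha i * marg f (x i) A) *+ #|Sstar| <= n%:R * alpha i * marg f (x i) A.
    rewrite -mulr_natl mulrA; apply: ler_wpM2r; first exact: (@marg_ge0 _ _ f f_mono _ _).
    apply: ler_wpM2r; first exact: ltW.
    by rewrite ler_nat.
  have -> : f (gprefix x i.+1) - f A = marg f (x i) A by rewrite gprefixS.
  rewrite lerBlDl; apply: (le_trans h1); apply: (le_trans hU).
  by rewrite lerD2l; apply: (le_trans h2).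
have ind : forall k, (k <= n)%N -> (f Sstar) - f (gprefix x k) <=
    expR (- \sum_(j < n | (j < k)%N) c j) * (f Sstar).
  elim=> [|k IH] kn.
    have -> : gprefix x 0 = set0.
      by apply/setP => z; rewrite inE; apply/imsetP => -[j]; rewrite inE.
    rewrite f_norm subr0 big_pred0 // oppr0 expR0 mul1r //.
  have kn' : (k < n)%N by [].
  set i := Ordinal kn'.
  have IHk := IH (ltnW kn).
  have Hs : \sum_(j < n | (j < k.+1)%N) c j = c i + \sum_(j < n | (j < k)%N) c j.
    rewrite (bigD1 i) //=; congr (_ + _); apply: eq_bigl => j.
    rewrite ltnS leq_eqVlt; case: (boolP (j == i)) => [/eqP ->|ji] /=.
      by rewrite ltnn andbF.
    by rewrite andbT (_ : (nat_of_ord j == k) = false) //; apply/negbTE;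
      apply: contra ji => /eqP jk; apply/eqP/val_inj.
  rewrite Hs opprD expRD -mulrA.
  have Kk := key i; rewrite /= in Kk.
  have mono : f (gprefix x k) <= f (gprefix x k.+1).
    by apply: (f_mono); rewrite (@gprefixS _ _ x i) subsetUr.
  case: (lerP ((f Sstar) - f (gprefix x k)) 0) => g0.
    apply: (@le_trans _ _ 0); last by rewrite !mulr_ge0 ?expR_ge0.
    by apply: le_trans g0; rewrite lerD2l lerN2.
  have na : 0 < n%:R * alpha i by rewrite mulr_gt0.
  have step : (f Sstar) - f (gprefix x k.+1) <= (1 - c i) * ((f Sstar) - f (gprefix x k)).
    have e : (f Sstar) - f (gprefix x k.+1) = ((f Sstar) - f (gprefix x k))
        - (f (gprefix x k.+1) - f (gprefix x k)) by rewrite opprB addrA subrK.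
    rewrite e mulrBl mul1r lerD2l lerN2.
    rewrite /c -invfM -(ler_pM2l na) mulrA mulfV ?gt_eqF // mul1r.
    exact: Kk.
  apply: (le_trans step).
  apply: le_trans (_ : expR (- c i) * ((f Sstar) - f (gprefix x k)) <= _).
    by apply: ler_wpM2r; [exact: ltW | exact: expR_ge1Dx].
  by apply: ler_wpM2l; [exact: expR_ge0|].
have := ind n (leqnn n).
have -> : \sum_(j < n | (j < n)%N) c j = n%:R^-1 * \sum_(i < n) (alpha i)^-1.
  by rewrite mulr_sumr; apply: eq_bigl => j; rewrite ltn_ord.
move=> H; rewrite mulrBl mul1r lerBlDl -lerBlDr.
exact: H.
Qed.
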